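(* Let $(Q,\rightarrow)$ be a finite transition system and $\mathscr{R}$ a preorder on $Q$. Then $\rightarrow^{-1}\subseteq \rightarrow_{\mathscr{R}}^{-1}\circ\mathscr{R}$ and $\rightarrow^{-1}\circ\mathscr{R}=\rightarrow_{\mathscr{R}}^{-1}\circ\mathscr{R}$. Explicitly: for every transition $q\rightarrow q'$ there is $q''$ with $q'\,\mathscr{R}\,q''$ and $q\rightarrow_{\mathscr{R}} q''$; and for all $x,y\in Q$, there exists $z$ with $x\,\mathscr{R}\,z$ and $y\rightarrow z$ iff there exists $z$ with $x\,\mathscr{R}\,z$ and $y\rightarrow_{\mathscr{R}} z$.
   Context: A finite transition system is a pair $(Q,\rightarrow)$ with $Q$ a finite set and $\rightarrow\subseteq Q\times Q$. For relations $\mathscr{R},\mathscr{S}$ on $Q$, $\mathscr{R}(q)=\{q'\mid q\,\mathscr{R}\,q'\}$, $\mathscr{R}(X)=\bigcup_{q\in X}\mathscr{R}(q)$, $\mathscr{R}^{-1}=\{(y,x)\mid (x,y)\in\mathscr{R}\}$, and the composition is $\mathscr{S}\circ\mathscr{R}=\{(x,y)\mid y\in\mathscr{S}(\mathscr{R}(x))\}$ (first $\mathscr{R}$, then $\mathscr{S}$). A preorder is a reflexive transitive relation; $[q]_{\mathscr{R}}=\{q'\mid q\,\mathscr{R}\,q'\wedge q'\,\mathscr{R}\,q\}$. A transition $q\rightarrow q'$ is $\mathscr{R}$-maximal, written $q\rightarrow_{\mathscr{R}}q'$, if for all $q''\in Q$, ($q\rightarrow q''$ and $q'\,\mathscr{R}\,q''$)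 implies $q''\in[q']_{\mathscr{R}}$; $\rightarrow_{\mathscr{R}}$ also denotes the relation formed by these transitions. *)

(* Defs.v *)
From mathcomp Require Import all_boot.
Set Implicit Arguments. Unset Strict Implicit. Unset Printing Implicit Defensive.

Definition rclass (Q : finType) (R : rel Q) (q : Q) : pred Q :=
  [pred q' | R q q' && R q' q].

Definition max_trans (Q : finType) (trans R : rel Q) (q q' : Q) : Prop :=
  trans q q' /\
  forall q'' : Q, trans q q'' -> R q' q'' -> q'' \in rclass R q'.

Definition relinv (Q : finType) (S : Q -> Q -> Prop) : Q -> Q -> Prop :=
  fun y x => S x y.
(* relcomp S R = S o R = {(x,y) | exists z, x R z /\ z S y}  (first R, then S) *)
Definition relcomp (Q : finType) (S R : Q -> Q -> Prop) : Q -> Q -> Prop :=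
  fun x y => exists z, R x z /\ S z y.
Definition relsub (Q : finType) (S T : Q -> Q -> Prop) : Prop :=
  forall x y, S x y -> T x y.
Definition releq (Q : finType) (S T : Q -> Q -> Prop) : Prop :=
  forall x y, S x y <-> T x y.

(* Main.v *)
Require Import Defs.
From mathcomp Require Import all_boot.

Lemma key (Q : finType) (trans R : rel Q)
    (R_refl : reflexive R) (R_trans : transitive R) q q' :
  trans q q' -> exists q'', R q' q'' /\ max_trans trans R q q''.
Proof.
move=> tq.
have P0 : trans q q' && R q' q' by rewrite tq R_refl.
case: (@arg_minnP _ q' (fun w => trans q w && R q' w) (fun w => #|[pred u | R w u]|) P0) => m /andP[tm Rm] Hmin.
exists m; split => //; split => // w tw Rmw.
have Hw : trans q w && R q' w by rewrite tw (R_trans _ _ _ Rm Rmw).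
have Hle := Hmin w Hw.
have sub : [pred u | R w u] \subset [pred u | R m u].
  by apply/subsetP => u; rewrite !inE => Rwu; apply: R_trans Rmw Rwu.
have [_ E] := subset_leqif_card sub.
have /subsetP H : [pred u | R m u] \subset [pred u | R w u].
  by rewrite -E eqn_leq (subset_leq_card sub) Hle.
have : m \in [pred u | R m u] by rewrite inE R_refl.
by move/H; rewrite inE => Rwm; rewrite inE /= Rmw Rwm.
Qed.

Theorem lemma1 (Q : finType) (trans R : rel Q)
    (R_refl : reflexive R) (R_trans : transitive R) :
  relsub (relinv (fun x y => trans x y))
         (relcomp (relinv (max_trans trans R)) (fun x y => R x y)) /\
  releq (relcomp (relinv (fun x y => trans x y)) (fun x y => R x y))
        (relcomp (relinv (max_trans trans R)) (fun x y => R x y)).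
Proof.
split.
  move=> x y /= t; have [z [Rz Mz]] := @key _ trans R R_refl R_trans _ _ t.
  by exists z.
move=> x y; split.
  case=> z [Rxz t]; have [w [Rzw Mw]] := @key _ trans R R_refl R_trans _ _ t.
  by exists w; split => //; apply: R_trans Rxz Rzw.
by case=> z [Rxz [t _]]; exists z.
Qed.
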